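(* Let $\mathbb{K}$ be a field, $q\in\mathbb{K}^*$ not a root of unity, $n\geq 3$, and $R=\mathcal{O}_q(M_n)$. Let $\sigma$ be a $\mathbb{K}$-algebra automorphism of $R$ such that there exist nonzero scalars $\lambda_{i,\alpha}\in\mathbb{K}^*$ ($1\le i,\alpha\le n$) with $\sigma(Y_{i,\alpha})-\lambda_{i,\alpha}Y_{i,\alpha}\in R_{\geq 2}$ for all $(i,\alpha)$. Then there exists a torus automorphism $\sigma_h$ of $R$ such that $\sigma_h\circ\sigma(Y_{i,\alpha})-Y_{i,\alpha}\in R_{\geq 2}$ for all $(i,\alpha)$.
   Context: $\mathcal{O}_q(M_n)$ is the $\mathbb{K}$-algebra generated by $Y_{i,\alpha}$, $1\le i,\alpha\le n$, subject to: $Y_{i,\beta}Y_{i,\alpha}=q^{-1}Y_{i,\alpha}Y_{i,\beta}$ for $\alpha<\beta$; $Y_{j,\alpha}Y_{i,\alpha}=q^{-1}Y_{i,\alpha}Y_{j,\alpha}$ for $i<j$; $Y_{j,\beta}Y_{i,\alpha}=Y_{i,\alpha}Y_{j,\beta}$ for $i<j$, $\alpha>\beta$; $Y_{j,\beta}Y_{i,\alpha}=Y_{i,\alpha}Y_{j,\beta}-(q-q^{-1})Y_{i,\beta}Y_{j,\alpha}$ for $i<j$, $\alpha<\beta$. It is $\mathbb{N}$-graded $R=\bigoplus_{i\in\mathbb{N}}R_i$ with each $Y_{i,\alpha}$ of degree 1, and $R_{\geq d}:=\bigoplus_{i\ge d}R_i$. For $h=(a_1,\dots,a_n,b_1,\dots,b_{n-1})\in(\mathbb{K}^*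 )^{2n-1}$, the torus automorphism $\sigma_h$ is defined by $\sigma_h(Y_{i,\alpha})=a_ib_\alpha Y_{i,\alpha}$ if $\alpha<n$ and $\sigma_h(Y_{i,n})=a_iY_{i,n}$; the torus automorphisms form a subgroup $\mathcal{H}$ of $\mathrm{Aut}(R)$. *)

(* Defs.v *)
From HB Require Import structures.
From mathcomp Require Import all_boot all_order all_algebra.
Set Implicit Arguments. Unset Strict Implicit. Unset Printing Implicit Defensive.
Import Order.TTheory GRing.Theory Num.Theory.
Local Open Scope ring_scope.

Definition alg_hom (K : fieldType) (A B : algType K) (f : A -> B) : Prop :=
  [/\ forall x y, f (x + y) = f x + f y,
      forall x y, f (x * y) = f x * f y,
      f 1 = 1
    & forall (k : K) x, f (k *: x) = k *: f x].

Definition alg_aut (K : fieldType) (A : algType K) (f : A -> A) : Prop :=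
  alg_hom f /\ bijective f.

(* The defining relations of O_q(M_n) on a family Z_{i,alpha}
   (indices 1..n are represented by 'I_n = {0..n-1}). *)
Definition qmat_rel (K : fieldType) (q : K) (n : nat) (A : algType K)
    (Z : 'I_n -> 'I_n -> A) : Prop :=
  [/\ forall (i a b : 'I_n), (a < b)%N -> Z i b * Z i a = q^-1 *: (Z i a * Z i b),
      forall (i j a : 'I_n), (i < j)%N -> Z j a * Z i a = q^-1 *: (Z i a * Z j a),
      forall (i j a b : 'I_n), (i < j)%N -> (b < a)%N -> Z j b * Z i a = Z i a * Z j b
    & forall (i j a b : 'I_n), (i < j)%N -> (a < b)%N ->
        Z j b * Z i a = Z i a * Z j b - (q - q^-1) *: (Z i b * Z j a)].

(* (R, Y) is the K-algebra presented by generators Y_{i,alpha} and the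
   relations above, i.e. (R, Y) satisfies the universal property of O_q(M_n). *)
Definition is_Oq_Mn (K : fieldType) (q : K) (n : nat) (R : algType K)
    (Y : 'I_n -> 'I_n -> R) : Prop :=
  qmat_rel q Y /\
  forall (A : algType K) (Z : 'I_n -> 'I_n -> A), qmat_rel q Z ->
    (exists f : R -> A, alg_hom f /\ forall i a, f (Y i a) = Z i a) /\
    (forall f g : R -> A, alg_hom f -> alg_hom g ->
       (forall i a, f (Y i a) = Z i a) -> (forall i a, g (Y i a) = Z i a) ->
       f =1 g).

Definition qmono (K : fieldType) (n : nat) (R : algType K)
    (Y : 'I_n -> 'I_n -> R) (w : seq ('I_n * 'I_n)) : R :=
  \prod_(p <- w) Y p.1 p.2.

(* x \in R_{>= d}: x is a finite linear combination of monomials of degree >= d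
   (R_i is the span of the monomials of degree i). *)
Definition Rge (K : fieldType) (n : nat) (R : algType K)
    (Y : 'I_n -> 'I_n -> R) (d : nat) (x : R) : Prop :=
  exists s : seq (K * seq ('I_n * 'I_n)),
    all (fun c => (d <= size c.2)%N) s /\
    x = \sum_(c <- s) c.1 *: qmono Y c.2.

(* tau is the torus automorphism sigma_h, h = (a_1..a_n, b_1..b_{n-1}):
   sigma_h(Y_{i,alpha}) = a_i b_alpha Y_{i,alpha} (alpha < n),
   sigma_h(Y_{i,n}) = a_i Y_{i,n}.  Here b is indexed by 'I_n but only
   b_alpha with alpha < n-1 (0-based) are used. *)
Definition torus_factor (K : fieldType) (n : nat) (a b : 'I_n -> K) (i al : 'I_n) : K :=
  a i * (if (al < n.-1)%N then b al else 1).

Definition is_torus_aut (K : fieldType) (n : nat) (R : algType K)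
    (Y : 'I_n -> 'I_n -> R) (tau : R -> R) : Prop :=
  exists a b : 'I_n -> K,
    [/\ forall i, a i != 0,
        forall al : 'I_n, (al < n.-1)%N -> b al != 0,
        alg_aut tau
      & forall i al, tau (Y i al) = torus_factor a b i al *: Y i al].

(* Main.v *)
Require Import Defs.
From HB Require Import structures.
From mathcomp Require Import all_boot all_order all_algebra.
From mathcomp Require Import zify ring.
Import Order.TTheory GRing.Theory Num.Theory.
Local Open Scope ring_scope.

Module TruncM.


Section Trunc.
Variables (K : fieldType) (T : finType) (B : T -> T -> K).
Local Notation m := #|T|.
Definition tpos (x : T) : 'I_(m.+2) := lift ord0 (widen_ord (leqnSn m) (enum_rank x)).
Definition Emx : 'M[K]_(m.+2) := delta_mx ord_max ord0.
Definition Zmx (x : T) : 'M[K]_(m.+2) :=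
  delta_mx (tpos x) ord0 + \sum_y B x y *: delta_mx ord_max (tpos y).

Lemma tpos0 x : (ord0 == tpos x) = false.
Proof. by apply/negbTE; rewrite /tpos neq_lift. Qed.
Lemma tposM x : (tpos x == ord_max) = false.
Proof. apply/negbTE; rewrite -val_eqE /= /bump /= add1n eqSS. have h : (enum_rank x < #|T|)%N by exact: ltn_ord. by rewrite ltn_eqF. Qed.
Lemma ord0M k : (ord0 == ord_max :> 'I_(k.+2)) = false.
Proof. by []. Qed.
Lemma tpos_eq x y : (tpos x == tpos y) = (x == y).
Proof.
apply/eqP/eqP => [|->//]. move/lift_inj. move/(congr1 val) => /= h.
by apply: enum_rank_inj; apply: val_inj.
Qed.

Lemma ZZ x y : Zmx x * Zmx y = B x y *: Emx.
Proof.
rewrite -mulmxE /Zmx mulmxDl !mulmxDr mul_delta_mx_cond tpos0 mulr0n add0r.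
rewrite mulmx_sumr big1 ?add0r; last first.
  by move=> z _; rewrite -scalemxAr mul_delta_mx_cond (_ : (ord0 == ord_max) = false) ?mulr0n ?scaler0.
rewrite mulmx_suml (bigD1 y) //= -scalemxAl mul_delta_mx_cond eqxx mulr1n.
rewrite big1 ?addr0; last first.
  by move=> z /negbTE nz; rewrite -scalemxAl mul_delta_mx_cond tpos_eq nz mulr0n scaler0.
rewrite mulmx_suml big1 ?addr0 //.
move=> z _; rewrite -scalemxAl mulmx_sumr big1 ?scaler0 //.
by move=> w _; rewrite -scalemxAr mul_delta_mx_cond tposM mulr0n scaler0.
Qed.

Lemma EZ x : Emx * Zmx x = 0.
Proof.
rewrite -mulmxE /Zmx /Emx mulmxDr mul_delta_mx_cond tpos0 mulr0n add0r mulmx_sumr big1 //.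
by move=> z _; rewrite -scalemxAr mul_delta_mx_cond (_ : (ord0 == ord_max) = false) ?mulr0n ?scaler0.
Qed.

Lemma ZE x : Zmx x * Emx = 0.
Proof.
rewrite -mulmxE /Zmx /Emx mulmxDl mul_delta_mx_cond (_ : (ord0 == ord_max) = false) ?mulr0n ?add0r; last by []. rewrite mulmx_suml big1 //.
by move=> z _; rewrite -scalemxAl mul_delta_mx_cond tposM mulr0n scaler0.
Qed.

Lemma EE : Emx * Emx = 0.
Proof. by rewrite -mulmxE /Emx mul_delta_mx_cond (_ : (ord0 == ord_max) = false) ?mulr0n. Qed.

Lemma Emx_coef k : (k *: Emx) ord_max ord0 = k.
Proof. by rewrite !mxE !eqxx mulr1. Qed.
End Trunc.

Arguments Zmx {K T}.
Arguments Emx {K T}.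

End TruncM.
Import TruncM.

Module HomM.
Set Implicit Arguments.


Section Hom.
Variables (K : fieldType) (A B : algType K) (f : A -> B).
Hypothesis hf : alg_hom f.
Lemma ah0 : f 0 = 0.
Proof. case: hf => _ _ _ hs. by rewrite -(scale0r (0:A)) hs scale0r. Qed.
Lemma ahD x y : f (x + y) = f x + f y. Proof. by case: hf. Qed.
Lemma ahM x y : f (x * y) = f x * f y. Proof. by case: hf. Qed.
Lemma ah1 : f 1 = 1. Proof. by case: hf. Qed.
Lemma ahZ k x : f (k *: x) = k *: f x. Proof. by case: hf. Qed.
Lemma ahN x : f (- x) = - f x.
Proof. by rewrite -scaleN1r ahZ scaleN1r. Qed.
Lemma ahB x y : f (x - y) = f x - f y.
Proof. by rewrite ahD ahN. Qed.
Lemma ah_sum (I : Type) (s : seq I) (F : I -> A) :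
  f (\sum_(c <- s) F c) = \sum_(c <- s) f (F c).
Proof. elim: s => [|c s IH]; first by rewrite !big_nil ah0.
by rewrite !big_cons ahD IH. Qed.
Lemma ah_prod (I : Type) (s : seq I) (F : I -> A) :
  f (\prod_(c <- s) F c) = \prod_(c <- s) f (F c).
Proof. elim: s => [|c s IH]; first by rewrite !big_nil ah1.
by rewrite !big_cons ahM IH. Qed.
End Hom.

Lemma ah_comp (K : fieldType) (A B C : algType K) (f : A -> B) (g : B -> C) :
  alg_hom f -> alg_hom g -> alg_hom (g \o f).
Proof.
move=> hf hg; split => [x y|x y||k x] /=.
- by rewrite !ahD.
- by rewrite !ahM.
- by rewrite !ah1.
- by rewrite !ahZ.
Qed.

Lemma ah_id (K : fieldType) (A : algType K) : alg_hom (@id A).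
Proof. by split. Qed.

Lemma sZZ (K : fieldType) (A : algType K) (c d : K) (x y : A) :
  (c *: x) * (d *: y) = (c * d) *: (x * y).
Proof. by rewrite -scalerAl -scalerAr scalerA. Qed.

End HomM.
Import HomM.


Definition Bf (K : fieldType) (q : K) n (i0 j0 a0 b0 : 'I_n) (x y : 'I_n * 'I_n) : K :=
  if (x == (i0,b0)) && (y == (j0,a0)) then 1
  else if (x == (j0,a0)) && (y == (i0,b0)) then 1
  else if (x == (j0,b0)) && (y == (i0,a0)) then - (q - q^-1) else 0.

Arguments Bf {K} q {n}.
Ltac bsolve := rewrite /Bf !xpair_eqE -!val_eqE /=;
  repeat (case: eqP => ? /=); try (exfalso; lia); try ring.

Lemma Brel (K : fieldType) (q : K) n (i0 j0 a0 b0 : 'I_n) :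
  (i0 < j0)%N -> (a0 < b0)%N ->
  qmat_rel q (fun i a => Zmx (Bf q i0 j0 a0 b0) (i, a)).
Proof.
move=> hij hab; split.
- move=> i a b ab; rewrite !ZZ scalerA; congr (_ *: _); bsolve.
- move=> i j a ij; rewrite !ZZ scalerA; congr (_ *: _); bsolve.
- move=> i j a b ij ba; rewrite !ZZ; congr (_ *: _); bsolve.
- move=> i j a b ij ab; rewrite !ZZ scalerA -scalerBl; congr (_ *: _); bsolve.
Qed.

Lemma prodZ (K : fieldType) (T : finType) (B : T -> T -> K) (w : seq T) :
  (2 <= size w)%N -> exists k, \prod_(p <- w) Zmx B p = k *: Emx.
Proof.
elim: w => [|x w IH] //= h.
case: w IH h => [|y w] IH h //.
case: w IH h => [|z w] IH h.
  by exists (B x y); rewrite !big_cons big_nil mulr1 ZZ.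
rewrite big_cons.
have [k ->] : exists k, \prod_(p <- [:: y, z & w]) Zmx B p = k *: Emx by apply: IH.
by exists 0; rewrite -scalerAr ZE scaler0 scale0r.
Qed.

Lemma Rge_img (K : fieldType) n (R : algType K) (Y : 'I_n -> 'I_n -> R)
  (B : 'I_n * 'I_n -> 'I_n * 'I_n -> K) (f : R -> 'M[K]_(#|{: 'I_n * 'I_n}|.+2)) :
  alg_hom f -> (forall i a, f (Y i a) = Zmx B (i, a)) ->
  forall r, Rge Y 2 r -> exists k, f r = k *: Emx.
Proof.
move=> hf hY r [s [hs ->]].
rewrite ah_sum //.
elim: s hs => [|c s IH] /=; first by exists 0; rewrite big_nil scale0r.
case/andP=> hc /IH [k hk].
rewrite big_cons hk (ahZ hf) /qmono (ah_prod hf).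
under eq_bigr => p _ do rewrite hY -surjective_pairing.
have [k' ->] := @prodZ _ _ B _ hc.
by exists (c.1 * k' + k); rewrite scalerA scalerDl.
Qed.

Lemma lam_prod (K : fieldType) (q : K) n (hq : q - q^-1 != 0)
  (R : algType K) (Y : 'I_n -> 'I_n -> R) (HR : is_Oq_Mn q Y)
  (sigma : R -> R) (hs : alg_hom sigma) (lambda : 'I_n -> 'I_n -> K)
  (hr : forall i al, Rge Y 2 (sigma (Y i al) - lambda i al *: Y i al))
  (i j a b : 'I_n) : (i < j)%N -> (a < b)%N ->
  lambda i a * lambda j b = lambda i b * lambda j a.
Proof.
move=> ij ab.
set B := Bf q i j a b.
have [[f [hf hfY]] _] := HR.2 _ _ (@Brel _ q _ i j a b ij ab).
have hg : forall x y, exists k, f (sigma (Y x y)) = lambda x y *: Zmx B (x, y) + k *: Emx.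
  move=> x y; have [k hk] := @Rge_img _ _ _ _ _ _ hf hfY _ (hr x y).
  exists k; rewrite -hk -hfY -(ahZ hf) -(ahD hf); congr f; by rewrite addrC subrK.
have hgg : forall x y x' y', f (sigma (Y x y)) * f (sigma (Y x' y')) =
   (lambda x y * lambda x' y' * B (x, y) (x', y')) *: Emx.
  move=> x y x' y'; have [k ->] := hg x y; have [k' ->] := hg x' y'.
  rewrite mulrDl !mulrDr !sZZ ZZ EE ZE EZ !scaler0 !addr0 scalerA.
  by congr (_ *: _); ring.
have := (HR.1); case=> _ _ _ /(_ i j a b ij ab) rel.
move: (congr1 (f \o sigma) rel) => /=.
rewrite !(ahB hs) !(ahZ hs) !(ahM hs) !(ahB hf) !(ahZ hf) !(ahM hf) !hgg.
rewrite scalerA -scalerBl => /(congr1 (fun M => @fun_of_matrix K _ _ M ord_max ord0)); rewrite !Emx_coef.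
have ne1 : (i != j) by rewrite -val_eqE /=; lia.
have ne2 : (a != b) by rewrite -val_eqE /=; lia.
rewrite /B /Bf !xpair_eqE !eqxx (negbTE ne1) (negbTE ne2) eq_sym (negbTE ne1) eq_sym (negbTE ne2) /=.
move=> h; apply: (mulfI hq).
transitivity (- (lambda j b * lambda i a * - (q - q^-1))); first ring.
rewrite h; ring.
Qed.

Module TorM.
Set Implicit Arguments. Unset Strict Implicit.


Lemma torus_rel (K : fieldType) (q : K) n (R : algType K) (Y : 'I_n -> 'I_n -> R)
  (c : 'I_n -> 'I_n -> K) :
  qmat_rel q Y -> (forall i j a b, c i a * c j b = c i b * c j a) ->
  qmat_rel q (fun i a => c i a *: Y i a).
Proof.
case=> r1 r2 r3 r4 hc; split.
- move=> i a b ab; rewrite !sZZ r1 // !scalerA; congr (_ *: _); ring.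
- move=> i j a ij; rewrite !sZZ r2 // !scalerA; congr (_ *: _); ring.
- move=> i j a b ij ba; rewrite !sZZ r3 //; congr (_ *: _); ring.
- move=> i j a b ij ab; rewrite !sZZ r4 // scalerBr !scalerA.
  have e := hc i j a b; congr (_ *: _ - _ *: _); [ring | rewrite -e; ring].
Qed.

Lemma torus_ex (K : fieldType) (q : K) n (R : algType K) (Y : 'I_n -> 'I_n -> R)
  (HR : is_Oq_Mn q Y) (c : 'I_n -> 'I_n -> K) :
  (forall i a, c i a != 0) -> (forall i j a b, c i a * c j b = c i b * c j a) ->
  exists tau : R -> R, alg_aut tau /\ forall i a, tau (Y i a) = c i a *: Y i a.
Proof.
move=> cnz hc.
have hc' : forall i j a b, (c i a)^-1 * (c j b)^-1 = (c i b)^-1 * (c j a)^-1.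
  by move=> i j a b; rewrite -!invfM hc.
have [[t [ht htY]] _] := HR.2 _ _ (torus_rel HR.1 hc).
have [[t' [ht' ht'Y]] _] := HR.2 _ _ (torus_rel HR.1 hc').
have [_ uniq] := HR.2 _ _ HR.1.
exists t; split => //; split => //; exists t'.
- move=> x; apply: (uniq (t' \o t) id (ah_comp ht ht') (@ah_id _ _)) => // i a /=.
  by rewrite htY (ahZ ht') ht'Y scalerA mulfV ?scale1r.
- move=> x; apply: (uniq (t \o t') id (ah_comp ht' ht) (@ah_id _ _)) => // i a /=.
  by rewrite ht'Y (ahZ ht) htY scalerA mulVf ?scale1r.
Qed.

Lemma tau_Rge (K : fieldType) n (R : algType K) (Y : 'I_n -> 'I_n -> R)
  (c : 'I_n -> 'I_n -> K) (tau : R -> R) d r :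
  alg_hom tau -> (forall i a, tau (Y i a) = c i a *: Y i a) ->
  Rge Y d r -> Rge Y d (tau r).
Proof.
move=> ht htY [s [hs ->]].
have hm : forall w, tau (qmono Y w) = (\prod_(p <- w) c p.1 p.2) *: qmono Y w.
  elim=> [|p w IH]; first by rewrite /qmono !big_nil (ah1 ht) scale1r.
  by rewrite /qmono !big_cons (ahM ht) htY -/(qmono Y w) IH sZZ.
exists [seq (x.1 * \prod_(p <- x.2) c p.1 p.2, x.2) | x <- s]; split.
  by rewrite all_map.
rewrite (ah_sum ht) big_map; apply: eq_bigr => x _ /=.
by rewrite (ahZ ht) hm scalerA.
Qed.

End TorM.
Import TorM.


Theorem lemma1p4 (K : fieldType) (q : K) (n : nat)
  (q_neq0 : q != 0)
  (q_not_root : forall k : nat, (0 < k)%N -> q ^+ k != 1)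
  (n_ge3 : (3 <= n)%N)
  (R : algType K) (Y : 'I_n -> 'I_n -> R) (HR : is_Oq_Mn q Y)
  (sigma : R -> R) (Hsigma : alg_aut sigma)
  (Hlin : exists lambda : 'I_n -> 'I_n -> K,
            (forall i al, lambda i al != 0) /\
            (forall i al, Rge Y 2 (sigma (Y i al) - lambda i al *: Y i al))) :
  exists tau : R -> R,
    is_torus_aut Y tau /\
    (forall i al, Rge Y 2 (tau (sigma (Y i al)) - Y i al)).
Proof.
case: Hlin => lambda [lnz hr].
have hs := Hsigma.1.
have hq : q - q^-1 != 0.
  apply/eqP => h; move/eqP: (q_not_root 2 isT); apply.
  have e : q = q^-1 by apply/eqP; rewrite -subr_eq0 h.
  by rewrite expr2 {2}e mulfV.
have la : forall i j a b, lambda i a * lambda j b = lambda i b * lambda j a.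
  have LP := fun i j a b => @lam_prod _ _ _ hq _ _ HR _ hs _ hr i j a b.
  move=> i j a b.
  case: (ltngtP i j) => hij; case: (ltngtP a b) => hab.
  - exact: LP i j a b hij hab.
  - by rewrite (LP i j b a hij hab).
  - by rewrite (val_inj hab).
  - by rewrite mulrC -(LP j i a b hij hab) mulrC.
  - by rewrite [LHS]mulrC (LP j i b a hij hab) mulrC.
  - by rewrite (val_inj hab).
  - by rewrite (val_inj hij) mulrC.
  - by rewrite (val_inj hij) mulrC.
  - by rewrite (val_inj hij) (val_inj hab).
pose c i a := (lambda i a)^-1.
have cnz : forall i a, c i a != 0 by move=> i a; rewrite invr_eq0.
have hc : forall i j a b, c i a * c j b = c i b * c j a.
  by move=> i j a b; rewrite /c -!invfM la.
have [tau [hta htY]] := torus_ex HR cnz hc.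
exists tau; split.
  have ln : (n.-1 < n)%N by lia.
  have l0 : (0 < n)%N by lia.
  pose lst := Ordinal ln. pose i0 := Ordinal l0.
  exists (fun i => c i lst), (fun al => lambda i0 lst / lambda i0 al).
  split => //.
  - by move=> al _; rewrite mulf_neq0 ?invr_eq0.
  - move=> i al; rewrite htY /torus_factor; congr (_ *: _).
    case: ifP => hal.
      have e := la i i0 al lst.
      have ey : lambda i0 lst = lambda i lst * lambda i0 al / lambda i al.
        by rewrite -e; field; rewrite lnz.
      rewrite /c ey; field.
      by rewrite !lnz.
    have -> : al = lst by apply: val_inj => /=; move: (ltn_ord al) hal; lia.
    by rewrite mulr1.
move=> i al.
have -> : tau (sigma (Y i al)) - Y i al = tau (sigma (Y i al) - lambda i al *: Y i al).
  by rewrite (ahB hta.1) (ahZ hta.1) htY scalerA mulfV ?scale1r.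
exact: tau_Rge hta.1 htY (hr i al).
Qed.
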